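(* For every $0\le j\le n$, every player $i\in[n]$ and every transition $\mathbf e\in\mathcal E_{\ge j}$, we have $\lambda^{j^*}_i(\mathbf e)\le|V|\cdot\kappa$, where $\kappa=\max_{e\in E}\ell_e(n)$.
   Context: Dynamic NCG $(\mathcal A,n)$: arena $\mathcal A=(V,E,\mathsf{src},\mathsf{tgt})$, $V$ finite, $E$ a partial function from $V\times V$ to non-decreasing piecewise-affine functions $\mathbb N\to\mathbb N$ (edge $e$ has cost $\ell_e$); $\mathsf{tgt}$ has only a self-loop of cost $0$ and is reachable from all states; players $[n]$. Configurations are maps $[n]\to V$; $c_{\mathsf{tgt}}$ maps all to $\mathsf{tgt}$. A move vector $(e_i)_i$ from $c$ gives the transition $(c,w,c')$, $c'(i)$ the target of $e_i$, $w(i)=\ell_{e_i}(u_i)$ with $u_i=|\{l:e_l=e_i\}|$; $\mathrm{cost}_i(c,c')=w(i)$; $T$ is the set of transitions; $c\Rightarrow c'$ means $(c,w,c')\in T$. For a path $\rho=(t_k)$, $\rho_{\ge k}$ is its suffix from $t_k$ and $\mathrm{cost}_i(\rho)$ the total payment of $i$. $\mathrm{dev}_i(c,c')=\{c''\mid c\Rightarrow c'',\ c''(l)=c'(l)\ \forall l\ne i\}$. $X_m$: configurations with exactly $m$ players at $\mathsf{tgt}$; $X_{\ge m}=\bigcup_{m'\ge m}X_{m'}$; $\mathcal E_m$, $\mathcal E_{\ge m}$: transitions $(c,w,c')$ with $c\in X_m$, resp. $c\in X_{\ge m}$. For $\lambda=(\lambda_i)$, $\lambda_i:\mathcal E_{\ge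 m}\to\mathbb N\cup\{\pm\infty\}$, and $c\in X_{\ge m}$, $\Lambda_\lambda(c)$ is the set of paths $\rho=(t_k)$ from $c$ visiting $c_{\mathsf{tgt}}$ with $\mathrm{cost}_i(\rho_{\ge k})\le\lambda_i(t_k)$ for all $i,k$. Define $\lambda^{n^*}_i(c_{\mathsf{tgt}},0^n,c_{\mathsf{tgt}})=0$ (note $\mathcal E_{\ge n}$ consists only of the self-loop on $c_{\mathsf{tgt}}$). For $j<n$ the $\lambda^{j^*}$-building functions $\mu^k_i:\mathcal E_{\ge j}\to\mathbb N\cup\{\pm\infty\}$ are: $\mu^k_i=\lambda^{(j+1)^*}_i$ on $\mathcal E_{\ge j+1}$; for $\mathbf e=(c,w,c')\in\mathcal E_j$, $\mu^0_i(\mathbf e)=0$ if $c(i)=\mathsf{tgt}$ else $+\infty$; for $k>0$, $\mu^k_i(\mathbf e)=0$ if $c(i)=\mathsf{tgt}$, otherwise $\min_{c''\in\mathrm{dev}_i(c,c')}\sup_{\rho\in\Lambda_{\mu^{k-1}}(c'')}(\mathrm{cost}_i(c,c'')+\mathrm{cost}_i(\rho))$ if $\Lambda_{\mu^{k-1}}(\tilde c)\ne\emptyset$ for all $(c,\tilde w,\tilde c)\in T$, and $-\infty$ otherwise. $\lambda^{j^*}_i$ is the pointwise limit of $(\mu^k_i)_k$ as $k\to\infty$. *)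

(* Defs.v *)
From HB Require Import structures.
From mathcomp Require Import all_boot all_order all_algebra.
From mathcomp Require Import all_classical all_reals all_analysis.
Set Implicit Arguments. Unset Strict Implicit. Unset Printing Implicit Defensive.
Import Order.TTheory GRing.Theory Num.Theory.
Local Open Scope classical_set_scope.
Local Open Scope ring_scope.

Record arena := Arena {
  vert : finType;
  edge : vert -> vert -> option (nat -> nat);
  asrc : vert;
  atgt : vert }.

(* Piecewise-affine function N -> N (finitely many affine pieces); on N this is
   the same as: affine (with integer coefficients) from some point on. *)
Definition piecewise_affine (f : nat -> nat) : Prop :=
  exists (N : nat) (a b : int), forall x, (N <= x)%N -> (f x)%:Z = a * x%:Z + b.

Definition nondecr (f : nat -> nat) : Prop := forall x y, (x <= y)%N -> (f x <= f y)%N.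

Definition is_edge (A : arena) (u v : vert A) : bool := isSome (edge u v).

Definition wf_arena (A : arena) : Prop :=
  (forall (u v : vert A) f, edge u v = Some f -> nondecr f /\ piecewise_affine f) /\
  (forall v, is_edge (atgt A) v -> v = atgt A) /\
  edge (atgt A) (atgt A) = Some (fun _ => 0%N) /\
  (forall v, connect (@is_edge A) v (atgt A)).

Section NCG.
Variables (R : realType) (A : arena) (n : nat).
Local Notation V := (vert A).
Local Notation tgt := (atgt A).

Definition config := {ffun 'I_n -> V}.

(* cost function of edge (u,v) (irrelevant default if not an edge) *)
Definition ell (u v : V) : nat -> nat := odflt (fun _ => 0%N) (edge u v).

Definition trans (c c' : config) : bool := [forall i, is_edge (c i) (c' i)].

Definition load (c c' : config) (i : 'I_n) : nat :=
  #|[set l | (c l, c' l) == (c i, c' i)]|.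

Definition cost (c c' : config) (i : 'I_n) : nat := ell (c i) (c' i) (load c c' i).

Definition ntgt (c : config) : nat := #|[set i | c i == tgt]|.

Definition ctgt : config := [ffun _ => tgt].

Definition dev (i : 'I_n) (c c' : config) : set config :=
  [set c'' | trans c c'' /\ forall l, l != i -> c'' l = c' l].

(* A path is given by its sequence of configurations rho 0, rho 1, ...;
   its k-th transition is (rho k, rho k.+1).  cost_i(rho_{>=k}): *)
Definition pcost (i : 'I_n) (rho : nat -> config) (k : nat) : \bar R :=
  ereal_sup (range (fun N => ((\sum_(k <= m < N) cost (rho m) (rho m.+1) i)%N%:R)%:E)).

Definition Lambda (mu : 'I_n -> config -> config -> \bar R) (c : config)
  : set (nat -> config) :=
  [set rho | rho 0%N = c /\ (forall k, trans (rho k) (rho k.+1)) /\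
             (exists k, rho k = ctgt) /\
             (forall i k, (pcost i rho k <= mu i (rho k) (rho k.+1))%E)].

(* lambda^{j*}-building functions, given lamnext = lambda^{(j+1)*} *)
Definition mu0 (j : nat) (lamnext : 'I_n -> config -> config -> \bar R)
  : 'I_n -> config -> config -> \bar R :=
  fun i c c' => if (j.+1 <= ntgt c)%N then lamnext i c c'
                else if c i == tgt then 0%E else +oo%E.

Definition mu_step (j : nat) (lamnext prev : 'I_n -> config -> config -> \bar R)
  : 'I_n -> config -> config -> \bar R :=
  fun i c c' =>
    if (j.+1 <= ntgt c)%N then lamnext i c c'
    else if c i == tgt then 0%E
    else if `[< forall c2, trans c c2 -> Lambda prev c2 !=set0 >] then
      ereal_inf [set ereal_sup [set ((cost c c2 i)%:R%:E + pcost i rho 0%N)%E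
                                 | rho in Lambda prev c2]
                | c2 in dev i c c']
    else -oo%E.

Definition mu (j : nat) (lamnext : 'I_n -> config -> config -> \bar R) (k : nat) :=
  iter k (mu_step j lamnext) (mu0 j lamnext).

Definition lamstep (j : nat) (lamnext : 'I_n -> config -> config -> \bar R)
  : 'I_n -> config -> config -> \bar R :=
  fun i c c' => limn (fun k => mu j lamnext k i c c').

(* lamaux d = lambda^{(n-d)*} *)
Fixpoint lamaux (d : nat) : 'I_n -> config -> config -> \bar R :=
  match d with
  | 0%N => fun _ _ _ => 0%E
  | d'.+1 => lamstep (n - d'.+1) (lamaux d')
  end.

Definition lamstar (j : nat) := lamaux (n - j).

Definition kappa : nat := \max_(u : V) \max_(v : V) (if edge u v is Some f then f n else 0%N).

End NCG.

(* Main.v *)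
Require Import Defs.
From HB Require Import structures.
From mathcomp Require Import all_boot all_order all_algebra.
From mathcomp Require Import all_classical all_reals all_analysis.
Import Order.TTheory GRing.Theory Num.Theory.
Local Open Scope classical_set_scope.
Local Open Scope ring_scope.

Section Proof.
Variables (R : realType) (A : arena) (n : nat).
Hypothesis wfA : wf_arena A.
Local Notation V := (vert A).
Local Notation tgt := (atgt A).
Local Notation F := ('I_n -> config A n -> config A n -> \bar R).

Fixpoint reach (m : nat) (v : V) : bool :=
  (v == tgt) || (if m is m'.+1 then [exists w, is_edge v w && reach m' w] else false).

Lemma reach_path (p : seq V) (x : V) :
  path (@is_edge A) x p -> last x p = tgt -> reach (size p) x.
Proof.
elim: p x => [|y p IH] x /=; first by move=> _ ->; rewrite eqxx.
move=> /andP[exy pp] hl; apply/orP; right; apply/existsP; exists y.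
by rewrite exy IH.
Qed.

Lemma reach_bound (v : V) : exists2 m, (m <= #|V|)%N & reach m v.
Proof.
have [_ [_ [_ hc]]] := wfA.
have /connectP [p pp hl] := hc v.
move: hl; case: (shortenP pp) => p' pp' up' _ hl'.
exists (size p'); last by apply: reach_path => //; rewrite -hl'.
apply: (@leq_trans (size (v :: p'))); first exact: leqnSn.
rewrite -(card_uniqP up'); exact: max_card.
Qed.

Lemma reach_step m v : reach m v -> v != tgt ->
  exists m', m = m'.+1 /\ exists2 w, is_edge v w & reach m' w.
Proof.
case: m => [|m] /= /orP[->//|] //.
move=> /existsP[w /andP[e r]] _; exists m; split => //; by exists w.
Qed.

Lemma cost_le (c c2 : config A n) i : is_edge (c i) (c2 i) -> (cost c c2 i <= kappa A n)%N.
Proof.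
rewrite /is_edge /cost /ell /kappa.
case E: (edge (c i) (c2 i)) => [f|] //= _.
have [hf _] := wfA.
have [nd _] := hf _ _ _ E.
apply: (@leq_trans (f n)).
  apply: nd; rewrite /load; apply: leq_trans (max_card _) _; by rewrite card_ord.
apply: leq_trans (leq_bigmax (c i)).
apply: leq_trans (leq_bigmax (c2 i)).
by rewrite E.
Qed.

Definition B (m : nat) : \bar R := ((m * kappa A n)%N%:R)%:E.

Lemma BS m : B m.+1 = ((kappa A n)%:R)%:E + B m.
Proof. by rewrite /B mulSn natrD EFinD. Qed.

Lemma B_ge0 m : (0 <= B m)%E.
Proof. by rewrite /B lee_fin ler0n. Qed.

Lemma Lambda_mono (p q : F) c : (forall i c c', (p i c c' <= q i c c')%E) ->
  Lambda p c `<=` Lambda q c.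
Proof.
move=> pq rho [h0 [ht [hk hc]]]; split => //; split => //; split => //.
by move=> i k; apply: le_trans (hc i k) (pq _ _ _).
Qed.

Lemma step_mono j ln (p q : F) : (forall i c c', (p i c c' <= q i c c')%E) ->
  forall i c c', (mu_step j ln p i c c' <= mu_step j ln q i c c')%E.
Proof.
move=> pq i c c'; rewrite /mu_step.
case: ifP => // _; case: ifP => // _.
case: (asboolP (forall c2, trans c c2 -> Lambda p c2 !=set0)) => hp; last by rewrite leNye.
have hq : forall c2, trans c c2 -> Lambda q c2 !=set0.
  move=> c2 t; have [rho hr] := hp c2 t; exists rho; exact: Lambda_mono hr.
rewrite (asboolT hq).
apply: le_ereal_inf_tmp => _ [c2 hd <-].
apply: ge_ereal_inf; exists (ereal_sup [set ((cost c c2 i)%:R%:E + pcost R i rho 0%N)%E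
                                 | rho in Lambda p c2]); first by exists c2.
apply: ereal_sup_le => _ [rho hr <-]; exists rho => //; exact: Lambda_mono hr.
Qed.

Lemma mu_noninc j (ln : F) i c c' : nonincreasing_seq (fun k => mu j ln k i c c').
Proof.
apply/nonincreasing_seqP => k.
elim: k i c c' => [|k IH] i c c'.
  rewrite /mu /= /mu_step /mu0; case: ifP => // _; case: ifP => // _.
  by rewrite leey.
rewrite /mu iterS [in X in (_ <= X)%E]iterS.
by apply: step_mono => i' d d'; apply: IH.
Qed.

Lemma lamstep_le j (ln : F) i c c' k : (lamstep j ln i c c' <= mu j ln k i c c')%E.
Proof.
rewrite /lamstep (cvg_lim _ (ereal_nonincreasing_cvgn (mu_noninc j ln i c c'))) //.
by apply: ereal_inf_lbound; exists k.
Qed.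

Lemma mu_bound j (ln : F)
  (Hln : forall i c c' m, trans c c' -> reach m (c i) -> (ln i c c' <= B m)%E) :
  forall k i c c' m, trans c c' -> reach m (c i) -> (m <= k)%N ->
  (mu j ln k i c c' <= B m)%E.
Proof.
elim => [|k IH] i c c' m tc rm hmk.
  rewrite /mu /= /mu0; case: ifP => _; first exact: Hln.
  case: ifP => [_|/negbT ni]; first exact: B_ge0.
  by have [m' [em _]] := @reach_step _ _ rm ni; rewrite em in hmk.
rewrite /mu iterS /mu_step -/(mu j ln k).
case: ifP => _; first exact: Hln.
case: ifP => [_|/negbT ni]; first exact: B_ge0.
case: asboolP => _; last by rewrite leNye.
have [m' [em [w ew rw]]] := @reach_step _ _ rm ni.
subst m.
pose c2 : config A n := [ffun l => if l == i then w else c' l].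
have tc2 : trans c c2.
  apply/forallP => l; rewrite ffunE; case: eqP => [->//|_].
  by move/forallP: tc.
apply: ge_ereal_inf; exists (ereal_sup [set ((cost c c2 i)%:R%:E + pcost R i rho 0%N)%E
                                 | rho in Lambda (mu j ln k) c2]).
  exists c2 => //; split => // l /negbTE; rewrite ffunE => ->//.
apply: ge_ereal_sup => _ [rho [h0 [ht [_ hc]]] <-].
rewrite BS; apply: leeD.
  rewrite lee_fin ler_nat; apply: cost_le; rewrite ffunE eqxx //.
apply: le_trans (hc i 0%N) _; rewrite h0.
apply: IH => //; first by rewrite -h0.
by rewrite ffunE eqxx.
Qed.

Lemma lamaux_bound d (i : 'I_n) c c' m : trans c c' -> reach m (c i) ->
  (lamaux R d i c c' <= B m)%E.
Proof.
elim: d i c c' m => [|d IH] i c c' m tc rm /=; first exact: B_ge0.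
apply: le_trans (lamstep_le _ _ _ _ _ m) _.
exact: mu_bound.
Qed.

End Proof.

Theorem corollaryC9 (R : realType) (A : arena) (n : nat) :
  wf_arena A ->
  forall (j : nat), (j <= n)%N ->
  forall (i : 'I_n) (c c' : config A n),
    trans c c' -> (j <= ntgt c)%N ->
    (lamstar R j i c c' <= ((#|vert A| * kappa A n)%N%:R)%:E)%E.
Proof.
move=> wfA j _ i c c' tc _.
have [m hm rm] := @reach_bound A wfA (c i).
apply: le_trans (@lamaux_bound R A n wfA _ _ _ _ _ tc rm) _.
by rewrite /B lee_fin ler_nat leq_mul2r hm orbT.
Qed.
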